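(* Let $k$ be a field with $1/2\in k$, let $A=k[[x_1,\dots,x_d]]$ and $B=A[[x_0]]$, with maximal ideal $\mathfrak m_B$. Let $F=x_0^2+x_1^2+\cdots+x_d^2+G$ with $G\in\mathfrak m_B^3$. Then there exist a unit $v_0\in B$, an element $a_0\in(x_1,\dots,x_d)B$ and an element $G_1\in(x_1,\dots,x_d)^3B$ such that $$F=v_0(x_0+a_0)^2+x_1^2+\cdots+x_d^2+G_1.$$ *)

(* Defs.v *)
(* Formal power series k[[x_0,...,x_{n-1}]] over a field,
   given by their coefficient functions on multi-indices. *)
From mathcomp Require Import all_boot all_order all_algebra.
Set Implicit Arguments. Unset Strict Implicit. Unset Printing Implicit Defensive.
Import GRing.Theory.
Local Open Scope ring_scope.

Definition mi (n : nat) := {ffun 'I_n -> nat}.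

Definition ps (R : nzRingType) (n : nat) := mi n -> R.

Section PS.
Variables (R : nzRingType) (n : nat).

Definition mi0 : mi n := [ffun _ => 0%N].
Definition mi_unit (i : 'I_n) : mi n := [ffun j => nat_of_bool (j == i)].

Definition ps0 : ps R n := fun _ => 0.
Definition psC (c : R) : ps R n := fun a => if a == mi0 then c else 0.
Definition ps1 : ps R n := psC 1.
Definition psX (i : 'I_n) : ps R n := fun a => if a == mi_unit i then 1 else 0.

Definition psadd (f g : ps R n) : ps R n := fun a => f a + g a.

(* The ordinal bound
   (\sum_i alpha i).+1 is large enough to contain every beta <= alpha. *)
Definition psmul (f g : ps R n) : ps R n := fun a =>
  \sum_(b : {ffun 'I_n -> 'I_((\sum_i a i).+1)} | [forall i, (b i <= a i)%N])
     f [ffun i => nat_of_ord (b i)] * g [ffun i => (a i - b i)%N].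

Definition ps_unit (f : ps R n) : Prop := exists g, psmul f g = ps1 /\ psmul g f = ps1.

Definition pssum (fs : seq (ps R n)) : ps R n := foldr psadd ps0 fs.

Definition in_ideal (gs : seq (ps R n)) (f : ps R n) : Prop :=
  exists hs : seq (ps R n), size hs = size gs /\
    f = pssum [seq psmul p.1 p.2 | p <- zip hs gs].

(* generators of I^3 when I is generated by gs: all triple products *)
Definition cube_gens (gs : seq (ps R n)) : seq (ps R n) :=
  flatten [seq [seq psmul (psmul g1 g2) g3 | g2 <- gs, g3 <- gs] | g1 <- gs].

Definition sumsq (gs : seq (ps R n)) : ps R n := pssum [seq psmul g g | g <- gs].
End PS.

(* In B = k[[x_0,...,x_d]] (d.+1 variables, x_0 has index 0): *)
Definition all_vars (R : nzRingType) (d : nat) : seq (ps R d.+1) :=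
  [seq psX R (inord i : 'I_d.+1) | i <- iota 0 d.+1].
Definition xs_vars (R : nzRingType) (d : nat) : seq (ps R d.+1) :=
  [seq psX R (inord i : 'I_d.+1) | i <- iota 1 d].

(* Main.v *)
Require Import Defs.
From HB Require Import structures.
From mathcomp Require Import all_boot all_order all_algebra.
From mathcomp Require Import boolp.
From mathcomp Require Import ring lra zify.
Set Implicit Arguments. Unset Strict Implicit. Unset Printing Implicit Defensive.
Import GRing.Theory.
Local Open Scope ring_scope.

Section Mi.
Variable n : nat.
Implicit Types a b c e : mi n.
Definition mle b a := [forall i, (b i <= a i)%N].
Definition madd b c : mi n := [ffun i => (b i + c i)%N].
Definition msub b c : mi n := [ffun i => (b i - c i)%N].
Definition mdeg a := (\sum_i a i)%N.
Definition below a : seq (mi n) :=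
  [seq [ffun i => nat_of_ord (x i)] | x : {ffun 'I_n -> 'I_(mdeg a).+1} <- enum [pred y : {ffun 'I_n -> 'I_(mdeg a).+1} | [forall i, (y i <= a i)%N]]].

Lemma mleP b a : reflect (forall i, (b i <= a i)%N) (mle b a).
Proof. exact: forallP. Qed.

Lemma mem_below a b : (b \in below a) = mle b a.
Proof.
apply/mapP/mleP => [[b' ]|H].
  rewrite mem_enum inE => /forallP H -> i; rewrite ffunE; exact: H.
have Hi i : (b i < (mdeg a).+1)%N.
  rewrite ltnS (leq_trans (H i)) // /mdeg (bigD1 i) //= leq_addr //.
exists [ffun i => Ordinal (Hi i)].
  by rewrite mem_enum inE; apply/forallP => i; rewrite ffunE /= H.
by apply/ffunP => i; rewrite !ffunE.
Qed.

Lemma below_uniq a : uniq (below a).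
Proof.
rewrite map_inj_uniq ?enum_uniq // => b b' /ffunP H; apply/ffunP => i.
by apply: val_inj; have := H i; rewrite !ffunE.
Qed.
End Mi.

Section Mi2.
Variable n : nat.
Implicit Types a b c e : mi n.

Lemma mle_refl a : mle a a.
Proof. by apply/mleP. Qed.
Lemma mle_trans a b c : mle a b -> mle b c -> mle a c.
Proof. by move=> /mleP H1 /mleP H2; apply/mleP => i; apply: leq_trans (H1 i) (H2 i). Qed.
Lemma mle0 a : mle (mi0 n) a.
Proof. by apply/mleP => i; rewrite ffunE. Qed.
Lemma msub0 a : msub a (mi0 n) = a.
Proof. by apply/ffunP => i; rewrite !ffunE subn0. Qed.
Lemma msubK a b : mle b a -> msub a (msub a b) = b.
Proof. by move=> /mleP H; apply/ffunP => i; rewrite !ffunE subKn. Qed.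
Lemma msub_le a b : mle (msub a b) a.
Proof. by apply/mleP => i; rewrite ffunE leq_subr. Qed.
Lemma madd_inj c : injective (madd c).
Proof.
move=> x y /ffunP H; apply/ffunP => i; have := H i; rewrite !ffunE.
by move/addnI.
Qed.
Lemma maddK c e : msub (madd c e) c = e.
Proof. by apply/ffunP => i; rewrite !ffunE addKn. Qed.
Lemma msubDA a c e : msub a (madd c e) = msub (msub a c) e.
Proof. by apply/ffunP => i; rewrite !ffunE subnDA. Qed.
Lemma msubKC c b : mle c b -> madd c (msub b c) = b.
Proof. by move=> /mleP H; apply/ffunP => i; rewrite !ffunE subnKC. Qed.
Lemma mdeg_sub a b : mle b a -> mdeg (msub a b) = (mdeg a - mdeg b)%N.
Proof.
move=> /mleP H; rewrite /mdeg -sumnB //; apply: eq_bigr => i _.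
by rewrite ffunE.
Qed.
Lemma mdeg_le a b : mle b a -> (mdeg b <= mdeg a)%N.
Proof. by move=> /mleP H; apply: leq_sum => i _. Qed.
Lemma mdeg0 b : mdeg b = 0%N -> b = mi0 n.
Proof.
move=> /eqP; rewrite /mdeg sum_nat_eq0 => /forallP H.
by apply/ffunP => i; rewrite ffunE; apply/eqP; have := H i.
Qed.
Lemma perm_below (s : seq (mi n)) a :
  uniq s -> (forall c, (c \in s) = mle c a) -> perm_eq s (below a).
Proof.
move=> us H; apply: uniq_perm => //; first exact: below_uniq.
by move=> c; rewrite H mem_below.
Qed.
End Mi2.


Section PSR.
Variables (k : fieldType) (n : nat).
Implicit Types (f g h : ps k n) (a b c e : mi n).

Lemma psmulE f g a : psmul f g a = \sum_(b <- below a) f b * g (msub a b).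
Proof.
rewrite /psmul /below big_map big_enum /=.
apply: eq_big => [x|x _]; first by rewrite inE.
by congr (_ * g _); apply/ffunP => i; rewrite !ffunE.
Qed.

Lemma psmulC f g : psmul f g = psmul g f.
Proof.
apply/funext => a; rewrite !psmulE.
have P : perm_eq [seq msub a b | b <- below a] (below a).
  apply: perm_below.
    rewrite map_inj_in_uniq ?below_uniq // => x y; rewrite !mem_below => hx hy E.
    by rewrite -(msubK hx) E msubK.
  move=> c; apply/mapP/idP => [[b _ ->]|hc]; first exact: msub_le.
  by exists (msub a c); [rewrite mem_below msub_le | rewrite msubK].
rewrite -(perm_big _ P) big_map; apply: eq_big_seq => b; rewrite mem_below => hb.
by rewrite msubK // mulrC.
Qed.

Lemma psCmul (x : k) f : psmul (psC x) f = fun a => x * f a.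
Proof.
apply/funext => a; rewrite psmulE (bigD1_seq (mi0 n)) ?mem_below ?mle0 ?below_uniq //=.
rewrite big1 => [|b hb]; first by rewrite /psC eqxx msub0 addr0.
by rewrite /psC (negbTE hb) mul0r.
Qed.

Lemma psmulDl f g h : psmul (psadd f g) h = psadd (psmul f h) (psmul g h).
Proof.
apply/funext => a; rewrite /psadd !psmulE -big_split; apply: eq_bigr => b _.
exact: mulrDl.
Qed.

Lemma psmulA f g h : psmul f (psmul g h) = psmul (psmul f g) h.
Proof.
apply/funext => a; rewrite !psmulE.
transitivity (\sum_(c <- below a) \sum_(b <- below a)
   (if mle c b then f c * g (msub b c) * h (msub a b) else 0)).
  apply: eq_big_seq => c; rewrite mem_below => /mleP hc.
  rewrite psmulE big_distrr /= -big_mkcond /= -[X in _ = X]big_filter.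
  have PERM : perm_eq [seq madd c e | e <- below (msub a c)] [seq b <- below a | mle c b].
    apply: uniq_perm; first by rewrite map_inj_uniq ?below_uniq //; apply: madd_inj.
      by rewrite filter_uniq // below_uniq.
    move=> b; rewrite mem_filter mem_below; apply/mapP/andP => [[e]|[/mleP h1 /mleP h2]].
      rewrite mem_below => /mleP he ->; split; apply/mleP => i; rewrite ffunE //.
        exact: leq_addr.
      by have := he i; have := hc i; rewrite ffunE; lia.
    exists (msub b c); last by rewrite msubKC //; apply/mleP.
    by rewrite mem_below; apply/mleP => i; rewrite !ffunE; apply: leq_sub2r.
  rewrite -(perm_big _ PERM) [RHS]big_map; apply: eq_big_seq => e _.
  by rewrite maddK -msubDA mulrA.
rewrite exchange_big; apply: eq_big_seq => b; rewrite mem_below => hb.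
rewrite psmulE big_distrl -big_mkcond -big_filter /=; apply: perm_big.
apply: perm_below; first by rewrite filter_uniq // below_uniq.
move=> c; rewrite mem_filter mem_below; apply/andP/idP => [[]//|hcb]; split=> //.
exact: mle_trans hb.
Qed.
End PSR.


Section Inst.
Variables (k : fieldType) (n : nat).
Definition PS := ps k n.
HB.instance Definition _ := gen_eqMixin PS.
HB.instance Definition _ := gen_choiceMixin PS.
Definition psopp (f : PS) : PS := fun a => - f a.
Lemma psaddA : associative (@psadd k n : PS -> PS -> PS).
Proof. by move=> f g h; apply/funext => a; rewrite /psadd addrA. Qed.
Lemma psaddC : commutative (@psadd k n : PS -> PS -> PS).
Proof. by move=> f g; apply/funext => a; rewrite /psadd addrC. Qed.
Lemma psadd0 : left_id (@ps0 k n : PS) (@psadd k n).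
Proof. by move=> f; apply/funext => a; rewrite /psadd /ps0 add0r. Qed.
Lemma psaddN : left_inverse (@ps0 k n : PS) psopp (@psadd k n).
Proof. by move=> f; apply/funext => a; rewrite /psadd /ps0 /psopp addNr. Qed.
HB.instance Definition _ := GRing.isZmodule.Build PS psaddA psaddC psadd0 psaddN.
Lemma psmulA' : associative (@psmul k n : PS -> PS -> PS).
Proof. by move=> f g h; rewrite psmulA. Qed.
Lemma psmulC' : commutative (@psmul k n : PS -> PS -> PS).
Proof. by move=> f g; rewrite psmulC. Qed.
Lemma psmul1 : left_id (@ps1 k n : PS) (@psmul k n).
Proof. by move=> f; rewrite /ps1 psCmul; apply/funext => a; rewrite mul1r. Qed.
Lemma psmulDl' : left_distributive (@psmul k n : PS -> PS -> PS) (@psadd k n).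
Proof. by move=> f g h; rewrite psmulDl. Qed.
Lemma ps1_neq0 : (@ps1 k n : PS) != @ps0 k n.
Proof.
apply/eqP => /(congr1 (fun f => f (mi0 n))); rewrite /ps1 /psC /ps0 eqxx.
by move/eqP; rewrite oner_eq0.
Qed.
HB.instance Definition _ := GRing.Zmodule_isComNzRing.Build PS psmulA' psmulC' psmul1 psmulDl' ps1_neq0.

Lemma PSaddE (f g : PS) : psadd f g = f + g. Proof. by []. Qed.
Lemma PSmulE (f g : PS) : psmul f g = f * g. Proof. by []. Qed.
Lemma PSoneE : @ps1 k n = (1 : PS). Proof. by []. Qed.
Lemma PSzeroE : @ps0 k n = (0 : PS). Proof. by []. Qed.
Lemma PScoefD (f g : PS) a : (f + g) a = f a + g a. Proof. by []. Qed.
Lemma PScoefN (f : PS) a : (- f) a = - f a. Proof. by []. Qed.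
Lemma PScoefB (f g : PS) a : (f - g) a = f a - g a. Proof. by []. Qed.
Lemma PScoef0 a : (0 : PS) a = 0. Proof. by []. Qed.
Lemma PScoefM (f g : PS) a : (f * g) a = \sum_(b <- below a) f b * g (msub a b).
Proof. exact: psmulE. Qed.

Goal forall x y : PS, (x + y) * (x + y) = x * x + 2%:R * x * y + y * y.
Proof. move=> x y. ring. Qed.
End Inst.


Section Inv.
Variables (k : fieldType) (n : nat).
Local Notation PS := (PS k n).
Implicit Types (f g v : PS).

Lemma coef1_0 : (1 : PS) (mi0 n) = 1.
Proof. by rewrite -PSoneE /ps1 /psC eqxx. Qed.

Lemma coef_sum N (F : 'I_N -> PS) a : (\sum_(i < N) F i) a = \sum_(i < N) F i a.
Proof.
by apply: (big_morph (fun f : PS => f a) (id1 := 0) (op1 := +%R)).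
Qed.

Lemma nilp (P : PS) : P (mi0 n) = 0 -> forall N a, (mdeg a < N)%N -> (P ^+ N) a = 0.
Proof.
move=> HP; elim=> [//|N IH] a ha.
rewrite exprS PScoefM big1_seq // => b /andP[_]; rewrite mem_below => hb.
have [->|nb] := eqVneq b (mi0 n); first by rewrite HP mul0r.
rewrite IH ?mulr0 // mdeg_sub //.
have : mdeg b != 0%N by apply: contra_neq nb => /mdeg0.
move=> H; move: ha H (mdeg_le hb); lia.
Qed.

Definition Sg v N : PS := \sum_(i < N) (1 - v) ^+ i.

Lemma Sg_mul v N : v * Sg v N = 1 - (1 - v) ^+ N.
Proof.
elim: N => [|N IH]; first by rewrite /Sg big_ord0 mulr0 expr0 subrr.
rewrite /Sg big_ord_recr /= mulrDr -/(Sg v N) IH exprSr; ring.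
Qed.

Lemma Sg_stab v : v (mi0 n) = 1 -> forall b N, (mdeg b < N)%N -> Sg v N b = Sg v (mdeg b).+1 b.
Proof.
move=> hv b; elim=> [//|N IH] hb.
move: hb; rewrite ltnS leq_eqVlt => /orP[/eqP->//|hb].
rewrite /Sg big_ord_recr /= PScoefD nilp ?addr0 //; first exact: IH.
by rewrite PScoefB coef1_0 hv subrr.
Qed.

Lemma inv_ex v : v (mi0 n) = 1 -> exists u : PS, v * u = 1.
Proof.
move=> hv; exists (fun a => Sg v (mdeg a).+1 a); apply/funext => a.
transitivity ((v * Sg v (mdeg a).+1) a).
  rewrite !PScoefM; apply: eq_big_seq => b; rewrite mem_below => hb.
  congr (_ * _); rewrite [RHS]Sg_stab //.
  by rewrite ltnS mdeg_le // msub_le.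
rewrite Sg_mul PScoefB nilp ?subr0 //.
by rewrite PScoefB coef1_0 hv subrr.
Qed.

Lemma coefM0 f g : (f * g) (mi0 n) = f (mi0 n) * g (mi0 n).
Proof.
rewrite PScoefM (bigD1_seq (mi0 n)) ?mem_below ?mle0 ?below_uniq //= msub0.
rewrite big1_seq ?addr0 // => b /andP[nb]; rewrite mem_below => hb.
have := mdeg_le hb.
have -> : mdeg (mi0 n) = 0%N by rewrite /mdeg big1 // => i _; rewrite ffunE.
rewrite leqn0 => /eqP/mdeg0 E.
by rewrite E eqxx in nb.
Qed.
End Inv.


Lemma In_map (A B : Type) (F : A -> B) s y :
  List.In y (map F s) <-> exists x, List.In x s /\ y = F x.
Proof.
elim: s y => [|x s IH] y /=; first by split=> // -[? []].
split.
  case=> [<-|/IH [z [h ->]]]; first by exists x; auto.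
  by exists z; auto.
case=> z [[<-|h] ->]; first by left.
by right; apply/IH; exists z.
Qed.

Lemma In_cat (A : Type) (s1 s2 : seq A) y : List.In y (s1 ++ s2) <-> List.In y s1 \/ List.In y s2.
Proof. elim: s1 => [|x s IH] /=; [tauto|rewrite IH; tauto]. Qed.

Lemma In_flatten (A : Type) (ss : seq (seq A)) y :
  List.In y (flatten ss) <-> exists s, List.In s ss /\ List.In y s.
Proof.
elim: ss => [|s ss IH] /=; first by split=> // -[? []].
rewrite In_cat IH; split=> [[h|[t [h1 h2]]]|[t [[<-|h1] h2]]].
- by exists s; auto.
- by exists t; auto.
- by left.
- by right; exists t.
Qed.

Section Ideal.
Variables (k : fieldType) (n : nat).
Local Notation PS := (PS k n).
Implicit Types (f g h r : PS) (gs : seq PS).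

Lemma PSeq (u v : PS) : u = v -> (u = v :> ps k n). Proof. by []. Qed.

Lemma ideal0 gs : in_ideal gs (0 : PS).
Proof.
elim: gs => [|x gs [hs [hsz E]]]; first by exists [::].
exists ((0 : PS) :: (hs : seq PS)); split; first by rewrite /= hsz.
by rewrite /= -E PSaddE PSmulE mul0r add0r.
Qed.

Lemma idealD gs f g : in_ideal gs f -> in_ideal gs g -> in_ideal gs (f + g).
Proof.
elim: gs f g => [|x gs IH] f g [hs1 [s1 E1]] [hs2 [s2 E2]].
  by case: hs1 s1 E1 => // _ E1; case: hs2 s2 E2 => // _ E2; exists [::]; split => //; rewrite E1 E2 /= PSzeroE addr0.
case: hs1 s1 E1 => // h1 hs1 [s1] E1; case: hs2 s2 E2 => // h2 hs2 [s2] E2.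
have [hs3 [s3 E3]] := IH _ _ (ex_intro _ hs1 (conj s1 erefl)) (ex_intro _ hs2 (conj s2 erefl)).
exists (((h1 : PS) + h2) :: (hs3 : seq PS)); split; first by rewrite /= s3.
rewrite E1 E2 /= -E3 !PSaddE !PSmulE; apply: PSeq; ring.
Qed.

Lemma idealM gs r f : in_ideal gs f -> in_ideal gs (r * f).
Proof.
elim: gs f => [|x gs IH] f [hs1 [s1 E1]].
  by case: hs1 s1 E1 => // _ E1; exists [::]; split => //; rewrite E1 /= PSzeroE mulr0.
case: hs1 s1 E1 => // h1 hs1 [s1] E1.
have [hs3 [s3 E3]] := IH _ (ex_intro _ hs1 (conj s1 erefl)).
exists ((r * (h1 : PS)) :: (hs3 : seq PS)); split; first by rewrite /= s3.
rewrite E1 /= -E3 !PSaddE !PSmulE; apply: PSeq; ring.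
Qed.

Lemma idealN gs f : in_ideal gs f -> in_ideal gs (- f).
Proof. by move=> H; rewrite -mulN1r; apply: idealM. Qed.

Lemma idealB gs f g : in_ideal gs f -> in_ideal gs g -> in_ideal gs (f - g).
Proof. by move=> H1 H2; apply: idealD => //; apply: idealN. Qed.

Lemma ideal_gen gs g : List.In g gs -> in_ideal gs g.
Proof.
elim: gs => [//|x gs IH] /= [<-|/IH [hs [hsz E]]].
  have [hs [hsz E]] := ideal0 gs.
  exists ((1 : PS) :: (hs : seq PS)); split; first by rewrite /= hsz.
  by rewrite /= -E PSaddE PSmulE mul1r addr0.
exists ((0 : PS) :: (hs : seq PS)); split; first by rewrite /= hsz.
by rewrite /= -E PSaddE PSmulE mul0r add0r.
Qed.

Lemma ideal_ind gs (P : PS -> Prop) : P 0 -> (forall f g, P f -> P g -> P (f + g)) ->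
  (forall h g, List.In g gs -> P (h * g)) -> forall f, in_ideal gs f -> P f.
Proof.
move=> P0 PD PM; elim: gs PM => [|x gs IH] PM f [hs [s E]].
  by case: hs s E => // _ ->.
case: hs s E => // h hs [s] ->; rewrite /= PSaddE PSmulE; apply: PD.
  by apply: PM; left.
apply: IH; last by exists hs.
by move=> h' g hg; apply: PM; right.
Qed.

Lemma In_cube gs g : List.In g (cube_gens gs) <->
  exists g1 g2 g3, [/\ List.In g1 gs, List.In g2 gs, List.In g3 gs & g = g1 * g2 * g3].
Proof.
rewrite /cube_gens In_flatten; split.
  move=> [s [/In_map [g1 [h1 ->]]]] /In_flatten [t [/In_map [g2 [h2 ->]]]] /In_map [g3 [h3 ->]].
  by exists g1, g2, g3.
move=> [g1 [g2 [g3 [h1 h2 h3 ->]]]].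
eexists; split; first by apply/In_map; exists g1; split; first exact: h1.
apply/In_flatten; eexists; split; first by apply/In_map; exists g2; split; first exact: h2.
by apply/In_map; exists g3.
Qed.
End Ideal.


Section Main.
Variables (k : fieldType) (d : nat).
Local Notation n := d.+1.
Local Notation PS := (PS k n).
Local Notation X0 := (psX k (ord0 : 'I_n) : PS).
Local Notation xs := (xs_vars k d : seq PS).
Local Notation I1 := (in_ideal (xs_vars k d)).
Local Notation I3 := (in_ideal (cube_gens (xs_vars k d))).

Lemma all_varsE : all_vars k d = psX k ord0 :: xs_vars k d.
Proof.
rewrite /all_vars /=; congr (psX k _ :: _).
by apply: val_inj; rewrite /= inordK.
Qed.

Lemma psX_0 (i : 'I_n) : psX k i (mi0 n) = 0.
Proof.
rewrite /psX; case: eqP => // /ffunP /(_ i); rewrite !ffunE eqxx //.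
Qed.

Lemma var0 (y : PS) : y = X0 \/ List.In y xs -> y (mi0 n) = 0.
Proof.
case=> [->|]; first exact: psX_0.
by move=> /In_map [i [_ ->]]; apply: psX_0.
Qed.

Lemma all_cases (g : PS) : List.In g (all_vars k d) -> g = X0 \/ List.In g xs.
Proof. by rewrite all_varsE /= => -[<-|h]; auto. Qed.

Lemma triple (a b c : PS) : I1 a -> I1 b -> I1 c -> I3 (a * b * c).
Proof.
move=> ha hb hc; move: a ha.
apply: (ideal_ind (P := fun a : PS => I3 (a * b * c))).
- by rewrite !mul0r; apply: ideal0.
- by move=> f g h1 h2; rewrite !mulrDl; apply: idealD.
move=> h g1 hg1; rewrite -!mulrA; apply: idealM; rewrite mulrA.
move: b hb; apply: (ideal_ind (P := fun b : PS => I3 (g1 * b * c))).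
- by rewrite mulr0 !mul0r; apply: ideal0.
- by move=> f g h1 h2; rewrite mulrDr !mulrDl; apply: idealD.
move=> h' g2 hg2; have -> : g1 * (h' * g2) * c = h' * (g1 * g2 * c) by ring.
apply: idealM.
move: c hc; apply: (ideal_ind (P := fun c : PS => I3 (g1 * g2 * c))).
- by rewrite mulr0; apply: ideal0.
- by move=> f g h1 h2; rewrite mulrDr; apply: idealD.
move=> h'' g3 hg3; have -> : g1 * g2 * (h'' * g3) = h'' * (g1 * g2 * g3) by ring.
apply: idealM; apply: ideal_gen; apply/In_cube.
by exists g1, g2, g3.
Qed.

Definition Dec (f : PS) := exists P Q R : PS, f = X0 * X0 * P + X0 * Q + R /\
  P (mi0 n) = 0 /\ I1 Q /\ (forall c : PS, I1 c -> I3 (Q * c)) /\ I3 R.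

Lemma decP (P : PS) : P (mi0 n) = 0 -> Dec (X0 * X0 * P).
Proof.
move=> hP; exists P, 0, 0; split; first by rewrite mulr0 !addr0.
split=> //; split; first exact: ideal0.
split; last exact: ideal0.
by move=> c _; rewrite mul0r; apply: ideal0.
Qed.

Lemma decQ (Q : PS) : I1 Q -> (forall c : PS, I1 c -> I3 (Q * c)) -> Dec (X0 * Q).
Proof.
move=> h1 h2; exists 0, Q, 0; split; first by rewrite mulr0 add0r addr0.
split; first by [].
split; first exact: h1.
split; first exact: h2.
exact: ideal0.
Qed.

Lemma decR (R : PS) : I3 R -> Dec R.
Proof.
move=> h; exists 0, 0, R; split; first by rewrite !mulr0 !add0r.
split=> //; split; first exact: ideal0.
split; last exact: h.
by move=> c _; rewrite mul0r; apply: ideal0.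
Qed.

Lemma decG (G : PS) : in_ideal (cube_gens (all_vars k d)) G -> Dec G.
Proof.
move: G; apply: ideal_ind.
- by apply: decR; apply: ideal0.
- move=> f g [P1 [Q1 [R1 [E1 [p1 [q1 [c1 r1]]]]]]] [P2 [Q2 [R2 [E2 [p2 [q2 [c2 r2]]]]]]].
  exists (P1 + P2), (Q1 + Q2), (R1 + R2); split; first by rewrite E1 E2; ring.
  split; first by rewrite PScoefD p1 p2 addr0.
  split; first exact: idealD.
  split; last exact: idealD.
  by move=> c hc; rewrite mulrDl; apply: idealD; [apply: c1|apply: c2].
move=> h g /In_cube [g1 [g2 [g3 [h1 h2 h3 ->]]]].
have v1 := var0 (all_cases h1); have v2 := var0 (all_cases h2); have v3 := var0 (all_cases h3).
have PM (y : PS) : y (mi0 n) = 0 -> (h * y) (mi0 n) = 0 by move=> hy; rewrite coefM0 hy mulr0.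
case: (all_cases h1) => [e1|y1]; case: (all_cases h2) => [e2|y2];
  case: (all_cases h3) => [e3|y3].
- have -> : h * (g1 * g2 * g3) = X0 * X0 * (h * g3) by rewrite e1 e2; ring.
  exact/decP/PM.
- have -> : h * (g1 * g2 * g3) = X0 * X0 * (h * g3) by rewrite e1 e2; ring.
  exact/decP/PM.
- have -> : h * (g1 * g2 * g3) = X0 * X0 * (h * g2) by rewrite e1 e3; ring.
  exact/decP/PM.
- have -> : h * (g1 * g2 * g3) = X0 * (h * g2 * g3) by rewrite e1; ring.
  apply: decQ; first by apply: idealM; apply: ideal_gen.
  move=> c hc; rewrite -!mulrA; apply: idealM; rewrite !mulrA.
  by apply: triple => //; apply: ideal_gen.
- have -> : h * (g1 * g2 * g3) = X0 * X0 * (h * g1) by rewrite e2 e3; ring.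
  exact/decP/PM.
- have -> : h * (g1 * g2 * g3) = X0 * (h * g1 * g3) by rewrite e2; ring.
  apply: decQ; first by apply: idealM; apply: ideal_gen.
  move=> c hc; rewrite -!mulrA; apply: idealM; rewrite !mulrA.
  by apply: triple => //; apply: ideal_gen.
- have -> : h * (g1 * g2 * g3) = X0 * (h * g1 * g2) by rewrite e3; ring.
  apply: decQ; first by apply: idealM; apply: ideal_gen.
  move=> c hc; rewrite -!mulrA; apply: idealM; rewrite !mulrA.
  by apply: triple => //; apply: ideal_gen.
- apply: decR; apply: idealM; apply: triple; apply: ideal_gen => //.
Qed.

Lemma final_id (Y S P Q R u half : PS) : (1 + P) * u = 1 -> half * 2%:R = 1 ->
  Y * Y + S + (Y * Y * P + Y * Q + R) =
  (1 + P) * ((Y + Q * u * half) * (Y + Q * u * half)) +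
  (S + (R - (1 + P) * (Q * u * half) * (Q * u * half))).
Proof.
move=> hu hh.
transitivity (Y * Y + S + (Y * Y * P + Y * Q + R) + Y * Q * ((1 + P) * u * (half * 2%:R) - 1)).
  by rewrite hu hh mulr1 subrr mulr0 addr0.
ring.
Qed.
End Main.


Theorem lemma3p1 (k : fieldType) (d : nat) (h2 : (2%:R : k) != 0)
  (G : ps k d.+1) (hG : in_ideal (cube_gens (all_vars k d)) G) :
  exists (v0 a0 G1 : ps k d.+1),
    ps_unit v0 /\
    in_ideal (xs_vars k d) a0 /\
    in_ideal (cube_gens (xs_vars k d)) G1 /\
    psadd (sumsq (all_vars k d)) G
    = psadd (psmul v0 (psmul (psadd (psX k ord0) a0) (psadd (psX k ord0) a0)))
            (psadd (sumsq (xs_vars k d)) G1).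
Proof.
have [P [Q [R [EG [hP [hQ [hQc hR]]]]]]] := decG hG.
have hv : (1 + P : PS k d.+1) (mi0 d.+1) = 1 by rewrite PScoefD coef1_0 hP addr0.
have [u hu] := inv_ex hv.
pose half : PS k d.+1 := psC (2%:R^-1 : k).
have hh : half * 2%:R = 1.
  apply/funext => a; rewrite -PSmulE psCmul /=.
  have two : (2%:R : PS k d.+1) a = 2%:R * (1 : PS k d.+1) a.
    by rewrite [in LHS]mulr2n PScoefD mulr2n mulrDl mul1r.
  by rewrite two mulrA mulVf // mul1r.
exists (1 + P), (Q * u * half), (R - (1 + P) * (Q * u * half) * (Q * u * half)).
split; first by exists u; split; [exact: hu | rewrite PSmulE mulrC; exact: hu].
split; first by rewrite -mulrA mulrC; apply: idealM.
split.
  apply: idealB => //.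
  have -> : (1 + P) * (Q * u * half) * (Q * u * half) = ((1 + P) * (u * half) ^+ 2) * (Q * Q) by ring.
  by apply: idealM; apply: hQc.
rewrite all_varsE EG.
exact: (@final_id k d (psX k ord0) (sumsq (xs_vars k d)) P Q R u half hu hh).
Qed.
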